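(* For any odd prime $p$, any integer $\alpha\ge1$ and any integer $n\ge0$, \[ b_4\!\left(p^{2\alpha}n+\frac{(8i+p)p^{2\alpha-1}-1}{8}\right)\equiv 0 \pmod 2 \] for each $i=1,2,\ldots,p-1$.
   Context: For a positive integer $\ell$, $b_\ell(n)$ denotes the number of partitions of $n$ having no part divisible by $\ell$. *)

(* Defs.v *)
From mathcomp Require Import all_boot.
Set Implicit Arguments. Unset Strict Implicit. Unset Printing Implicit Defensive.

(* A partition of n is encoded by its multiplicity function:
   f k = number of times the part k occurs (k = 1..n), with f 0 = 0 and
   \sum_k k * f k = n.  Every multiplicity is at most n, so f can be taken
   of type {ffun 'I_n.+1 -> 'I_n.+1}; this is a bijection with partitions. *)
Definition partition_mult (n : nat) (f : {ffun 'I_n.+1 -> 'I_n.+1}) : bool :=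
  (f ord0 == 0 :> nat) && (\sum_(k < n.+1) k * f k == n).

Definition b (l n : nat) : nat :=
  #|[set f : {ffun 'I_n.+1 -> 'I_n.+1} |
      partition_mult f && [forall k : 'I_n.+1, (l %| k) ==> (f k == 0 :> nat)]]|.

(* Main.v *)
Require Import Defs.
From mathcomp Require Import all_boot.
From mathcomp Require Import all_algebra zify.
Set Implicit Arguments. Unset Strict Implicit. Unset Printing Implicit Defensive.
Import GRing.Theory.

Section Cong.
Local Open Scope ring_scope.
Local Notation F2 := 'F_2.
Local Notation PF := {poly 'F_2}.

Lemma two0 : (1 + 1 : PF) = 0.
Proof. by rewrite -polyCD (_ : (1 + 1 : F2) = 0) //; apply/eqP. Qed.

Lemma addxx (x : PF) : x + x = 0.
Proof. by rewrite -{1 2}(mul1r x) -mulrDl two0 mul0r. Qed.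

Lemma oppP (x : PF) : - x = x.
Proof. by apply/eqP; rewrite -subr_eq0 -opprD addxx oppr0. Qed.

Definition cong (M : nat) (a b : PF) := 'X^M %| a - b.

Lemma cong_refl M a : cong M a a.
Proof. by rewrite /cong subrr dvdp0. Qed.

Lemma cong_sym M a b : cong M a b -> cong M b a.
Proof. by rewrite /cong => h; rewrite -opprB oppP. Qed.

Lemma cong_trans M a b c : cong M a b -> cong M b c -> cong M a c.
Proof.
rewrite /cong => h1 h2; rewrite (_ : a - c = (a - b) + (b - c)); last by rewrite subrKA.
exact: dvdp_add.
Qed.

Lemma cong_add M a b c d : cong M a b -> cong M c d -> cong M (a + c) (b + d).
Proof.
rewrite /cong => h1 h2; rewrite (_ : a + c - (b + d) = (a - b) + (c - d)); last by rewrite opprD addrACA.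
exact: dvdp_add.
Qed.

Lemma cong_mul M a b c d : cong M a b -> cong M c d -> cong M (a * c) (b * d).
Proof.
rewrite /cong => h1 h2.
rewrite (_ : a * c - b * d = a * (c - d) + (a - b) * d); last first.
  by rewrite mulrBr mulrBl addrA subrK.
by apply: dvdp_add; [apply: dvdp_mull | apply: dvdp_mulr].
Qed.

Lemma cong_sum M (I : Type) (r : seq I) (P : pred I) (f g : I -> PF) :
  (forall i, P i -> cong M (f i) (g i)) ->
  cong M (\sum_(i <- r | P i) f i) (\sum_(i <- r | P i) g i).
Proof.
move=> h; elim/big_rec2: _ => [|i x y Pi hxy]; first exact: cong_refl.
exact: cong_add (h i Pi) hxy.
Qed.

Lemma cong_prod M (I : Type) (r : seq I) (P : pred I) (f g : I -> PF) :
  (forall i, P i -> cong M (f i) (g i)) ->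
  cong M (\prod_(i <- r | P i) f i) (\prod_(i <- r | P i) g i).
Proof.
move=> h; elim/big_rec2: _ => [|i x y Pi hxy]; first exact: cong_refl.
exact: cong_mul (h i Pi) hxy.
Qed.

Lemma cong_Xn M k : (M <= k)%N -> cong M ('X^k) 0.
Proof. by move=> h; rewrite /cong subr0 dvdp_exp2l. Qed.

Lemma cong_coef M a b n : cong M a b -> (n < M)%N -> a`_n = b`_n.
Proof.
rewrite /cong => /dvdpP [q hq] hn.
apply/eqP; rewrite -subr_eq0 -coefB hq coefMXn hn //.
Qed.

Lemma cong_cancel M u a b : u.[0] != 0 -> cong M (u * a) (u * b) -> cong M a b.
Proof.
move=> hu; rewrite /cong -mulrBr.
have cu : coprimep 'X^M u.
  have cX : coprimep u 'X by have := coprimep_XsubC u 0; rewrite subr0 rootE hu.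
  by rewrite coprimep_sym coprimep_expr.
by rewrite Gauss_dvdpr.
Qed.

End Cong.
Section Prods.
Local Open Scope ring_scope.
Local Notation PF := {poly 'F_2}.

Definition pr (P : pred nat) (K : nat) : PF :=
  \prod_(i < K) (if P i then 1 + 'X^i else 1).

Lemma pr_split (P Q R : pred nat) K :
  (forall i, R i = P i || Q i) -> (forall i, ~~ (P i && Q i)) ->
  pr R K = pr P K * pr Q K.
Proof.
move=> hR hPQ; rewrite /pr -big_split /=; apply: eq_bigr => i _.
rewrite hR; have := hPQ i; case: (P i); case: (Q i) => //= _; by rewrite ?mulr1 ?mul1r.
Qed.

Lemma prod_stab M L j (f : nat -> PF) :
  (forall l, (L <= l)%N -> cong M (f l) 1) -> (L <= j)%N ->
  cong M (\prod_(l < j) f l) (\prod_(l < L) f l).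
Proof.
move=> h; elim: j => [|j IH]; first by rewrite leqn0 => /eqP ->; exact: cong_refl.
rewrite leq_eqVlt => /orP [/eqP <-|]; first exact: cong_refl.
rewrite ltnS => hj; rewrite big_ord_recr /= -[X in cong _ _ X]mulr1.
exact: cong_mul (IH hj) (h _ hj).
Qed.

Lemma pr_stab M P K : (M <= K)%N -> cong M (pr P K) (pr P M).
Proof.
move=> hK; rewrite /pr; apply: (prod_stab (f := fun i => if P i then 1 + 'X^i else 1)) hK => l hl /=; case: (P l); last exact: cong_refl.
rewrite -[X in cong _ _ X]addr0; apply: cong_add; first exact: cong_refl.
exact: cong_Xn.
Qed.

Lemma pr0 P K : ~~ P 0%N -> (pr P K).[0] = 1.
Proof.
move=> hP; rewrite /pr horner_prod; apply: big1 => i _.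
case: (boolP (P i)) => hi; last by rewrite hornerE.
have i0 : (0 < i)%N by case: (i : nat) hi hP => //= ->.
by rewrite hornerD hornerXn expr0n eqn0Ngt i0 addr0 hornerE.
Qed.

Lemma blocks k n (f : nat -> PF) :
  \prod_(i < k * n) f i = \prod_(j < n) \prod_(r < k) f (k * j + r)%N.
Proof.
elim: n => [|n IH]; first by rewrite muln0 !big_ord0.
by rewrite mulnSr big_split_ord /= IH big_ord_recr.
Qed.

End Prods.
From mathcomp Require Import ring lra.
Section QBin.
Local Open Scope ring_scope.
Local Notation PF := {poly 'F_2}.

Fixpoint qb (m i : nat) {struct m} : PF :=
  match m, i with
  | 0, 0 => 1
  | 0, _.+1 => 0
  | m'.+1, 0 => 1
  | m'.+1, i'.+1 => qb m' i + 'X^(4 * (m' - i')) * qb m' i'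
  end.

Lemma qb_m0 m : qb m 0 = 1. Proof. by case: m. Qed.

Lemma qb_gt m i : (m < i)%N -> qb m i = 0.
Proof.
elim: m i => [|m IH] [|i] //= hi.
by rewrite !IH ?mulr0 ?addr0 // ltnW.
Qed.

Lemma qb_mm m : qb m m = 1.
Proof. by elim: m => //= m ->; rewrite qb_gt // subnn expr0 mulr1 add0r. Qed.

Definition qPF (m : nat) : PF := \prod_(l < m) (1 + 'X^(4 * l.+1)).

Lemma qPFS m : qPF m.+1 = qPF m * (1 + 'X^(4 * m.+1)).
Proof. by rewrite /qPF big_ord_recr. Qed.

Lemma qb_fact m i : (i <= m)%N -> qb m i * qPF i * qPF (m - i) = qPF m.
Proof.
elim: m i => [|m IH] [|i] //=.
  by move=> _; rewrite subn0 /qPF big_ord0 !mul1r.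
  by move=> _; rewrite subn0 /qPF big_ord0 !mul1r.
move=> hle; case: (ltngtP i m) => [hi|hgt|->]; [ | by exfalso; move: hle hgt; clear; lia | ]; last first.
  rewrite qb_gt // ?subSS !subnn add0r expr0 mul1r qb_mm mul1r.
  by rewrite {2}/qPF big_ord0 mulr1.
rewrite subSS.
have e1 := IH _ hi.
have e2 := IH _ (ltnW hi).
move: e1 e2; set d := (m - i.+1)%N => e1 e2.
have hd : (m - i = d.+1)%N by rewrite /d subnSK.
rewrite hd in e2 *; rewrite qPFS in e1; rewrite !qPFS in e2 *.
set Y := 'X^(4 * d.+1); set Z := 'X^(4 * i.+1).
have hYZ : Y * Z = 'X^(4 * m.+1) by rewrite -exprD; congr ('X^_); rewrite /d; lia.
transitivity (qb m i.+1 * (qPF i * (1 + Z)) * qPF d * (1 + Y) +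
   Y * (1 + Z) * (qb m i * qPF i * (qPF d * (1 + Y)))); first by ring.
rewrite e1 e2 -hYZ.
transitivity (qPF m * (1 + Y * Z) + qPF m * (Y + Y)); first by ring.
by rewrite addxx mulr0 addr0.
Qed.

Definition cc (i : nat) := (2 * (i * i.-1))%N.

Lemma qbin m (w z : PF) :
  \prod_(j < m) (w + z * 'X^(4 * j)) =
  \sum_(i < m.+1) 'X^(cc i) * qb m i * z ^+ i * w ^+ (m - i).
Proof.
elim: m => [|m IH].
  by rewrite big_ord0 big_ord1 /= /cc expr0 !mulr1.
rewrite big_ord_recr /= IH [RHS]big_ord_recl.
rewrite mulrDr !big_distrl /=.
rewrite [X in _ = _ + X](eq_bigr (fun i : 'I_m.+1 =>
   'X^(cc i.+1) * qb m i.+1 * z ^+ i.+1 * w ^+ (m - i) +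
   'X^(cc i) * qb m i * z ^+ i * w ^+ (m - i) * (z * 'X^(4 * m)))); last first.
  move=> i _; rewrite /bump /= ?add1n ?add0n subSS mulrDr !mulrDl.
  congr (_ + _).
  have hi := ltn_ord i.
  have ex : (cc i.+1 + 4 * (m - i) = cc i + 4 * m)%N.
    by rewrite /cc; case: (nat_of_ord i) hi => [|k] hk /=; nia.
  have ex' : 'X^(cc i.+1) * 'X^(4 * (m - i)) = 'X^(cc i) * 'X^(4 * m) :> PF by rewrite -!exprD ex.
  transitivity (('X^(cc i.+1) * 'X^(4 * (m - i))) * qb m i * z ^+ i * z * w ^+ (m - i)); first by rewrite exprS; ring.
  rewrite ex'; ring.
rewrite big_split /= addrA; congr (_ + _).
rewrite [X in _ + X]big_ord_recr /= qb_gt // mulr0 !mul0r addr0.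
rewrite [LHS]big_ord_recl /=.
rewrite !qb_m0 /cc /= !expr0 subn0 !mul1r exprSr; congr (_ + _).
apply: eq_bigr => i _ /=.
have hi := ltn_ord i.
rewrite /bump /= ?add1n ?add0n.
rewrite (_ : (m - i = (m - i.+1).+1)%N); last by rewrite subnSK.
by rewrite [w ^+ (_.+1)]exprSr mulrA.
Qed.

End QBin.
Section JTP.
Local Open Scope ring_scope.
Local Notation PF := {poly 'F_2}.

Definition ee n i := if (n <= i)%N then ((i - n) * (2 * (i - n) - 1))%N
                     else ((n - i) * (2 * (n - i) + 1))%N.
Definition AA n := (2 * (n * (n - 1)) + n * (4 * n - 1))%N.

Lemma ex_arith n i : (1 <= n)%N -> (i <= 2 * n)%N -> (cc i + (4 * n - 1) * (2 * n - i) = AA n + ee n i)%N.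
Proof.
move=> h1 h2; rewrite /cc /AA /ee.
have [n' en] : exists n', n = n'.+1 by exists n.-1; lia.
subst n.
case: leqP => hi.
- have [m em] : exists m, n'.+1 = (i + m.+1)%N by exists (n'.+1 - i.+1)%N; lia.
  rewrite em addKn.
  have -> : (2 * (i + m.+1) - i = i + 2 * m.+1)%N by lia.
  have -> : (4 * (i + m.+1) - 1 = 4 * (i + m) + 3)%N by lia.
  have -> : (i + m.+1 - 1 = i + m)%N by lia.
  case: i {hi h2 em} => [|i] /=; nia.
- have [k ek] : exists k, i = (n'.+1 + k)%N by exists (i - n'.+1)%N; lia.
  subst i. rewrite addKn addSn /=.
  have [j ej] : exists j, (n'.+1 = k + j)%N by exists (n'.+1 - k)%N; lia.
  have -> : (2 * n'.+1 - (n'.+1 + k) = j)%N by lia.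
  case: k ej h2 hi => [|k] ej h2 hi; rewrite ?muln0 ?addn0.
    nia.
  have -> : (2 * k.+1 - 1 = 2 * k + 1)%N by lia.
  have -> : (4 * n'.+1 - 1 = 4 * n' + 3)%N by lia.
  have -> : (n'.+1 - 1 = n')%N by lia.
  nia.
Qed.

Lemma ee_sq n i : exists x, (8 * ee n i + 1 = x * x)%N.
Proof.
rewrite /ee; case: leqP => _.
- case: (i - n)%N => [|k]; first by exists 1%N.
  exists (4 * k.+1 - 1)%N; nia.
- by exists (4 * (n - i) + 1)%N; nia.
Qed.

Lemma ee_big M i : ((i < M) || (3 * M < i))%N -> (M <= ee (2 * M) i)%N.
Proof.
rewrite /ee => h; case: (leqP (2 * M) i) => hi.
- have hk : (M < i - 2 * M)%N by lia.
  move: (i - 2 * M)%N hk => k hk. nia.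
- have hk : (M < 2 * M - i)%N by lia.
  move: (2 * M - i)%N hk => k hk. nia.
Qed.

Lemma prodXn n : \prod_(j < n) ('X^(4 * j) : PF) = 'X^(2 * (n * (n - 1))).
Proof.
elim: n => [|n IH]; first by rewrite big_ord0.
rewrite big_ord_recr /= IH -exprD; congr ('X^_).
case: n {IH} => [|n] //=; nia.
Qed.

Lemma pr_odd n : pr odd (4 * n) = \prod_(j < n) ((1 + 'X^(4 * j + 1)) * (1 + 'X^(4 * j + 3))).
Proof.
rewrite /pr (blocks 4 n (fun i => if odd i then 1 + 'X^i else 1)); apply: eq_bigr => j _.
have o r : odd (4 * j + r)%N = odd r by rewrite oddD oddM.
rewrite !big_ord_recr big_ord0 /= !o /= !mul1r mulr1.
by [].
Qed.

Lemma jtp_lhs n : (1 <= n)%N ->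
  \prod_(j < 2 * n) ('X^(4 * n - 1) + 1 * 'X^(4 * j)) = 'X^(AA n) * pr odd (4 * n) :> PF.
Proof.
move=> hn.
rewrite mul2n -addnn big_split_ord /=.
rewrite (eq_bigr (fun j : 'I_n => 'X^(4 * j) * (1 + 'X^(4 * (n - j.+1) + 3)))); last first.
  move=> j _; rewrite mul1r mulrDr mulr1 -exprD addrC; congr (_ + 'X^_).
  have := ltn_ord j; lia.
rewrite [X in _ * X](eq_bigr (fun j : 'I_n => 'X^(4 * n - 1) * (1 + 'X^(4 * j + 1)))); last first.
  move=> j _; rewrite mul1r mulrDr mulr1 -exprD; congr (_ + 'X^_).
  move: hn; clear; lia.
rewrite !big_split /= prodXn prodr_const card_ord -exprM.
rewrite pr_odd big_split /=.
have -> : \prod_(j < n) (1 + 'X^(4 * (n - j.+1) + 3)) = \prod_(j < n) (1 + 'X^(4 * j + 3)) :> PF.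
  rewrite -(big_mkord xpredT (fun j => 1 + 'X^(4 * j + 3))).
  rewrite big_rev_mkord subn0; apply: eq_bigr => j _; done.
rewrite /AA exprD [(_ * (4 * n - 1))%N]mulnC.
set a := 'X^(2 * _); set b := 'X^(_ * n); set c := \prod_(i < n) (1 + 'X^(4 * i + 1)).
set d := \prod_(i < n) _.
ring.
Qed.

Lemma jtp n : (1 <= n)%N ->
  \sum_(i < (2 * n).+1) 'X^(ee n i) * qb (2 * n) i = pr odd (4 * n).
Proof.
move=> hn.
apply: (@mulfI _ ('X^(AA n) : PF)); first by rewrite monic_neq0 ?monicXn.
rewrite -jtp_lhs // qbin mulr_sumr; apply: eq_bigr => i _.
have hi : (i <= 2 * n)%N by have := ltn_ord i; lia.
rewrite expr1n mulr1 -exprM.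
symmetry; transitivity ('X^(cc i) * 'X^((4 * n - 1) * (2 * n - i)) * qb (2 * n) i); first by ring.
rewrite -exprD ex_arith // exprD; ring.
Qed.

End JTP.
Section Euler.
Local Open Scope ring_scope.
Local Notation PF := {poly 'F_2}.

Lemma pr_unit P K : ~~ P 0%N -> (pr P K).[0] != 0.
Proof. by move=> h; rewrite pr0 // oner_eq0. Qed.

Lemma sq1 (a : PF) : (1 + a) * (1 + a) = 1 + a * a.
Proof.
transitivity (1 + a * a + (a + a)); first by ring.
by rewrite addxx addr0.
Qed.

Lemma pr_sq K : pr (fun i => 0 < i)%N K * pr (fun i => 0 < i)%N K =
  pr (fun i => (0 < i) && ~~ odd i)%N (2 * K).
Proof.
rewrite /pr -big_split /= (blocks 2 K (fun i => if ((0 < i) && ~~ odd i)%N then 1 + 'X^i else 1)).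
apply: eq_bigr => j _.
rewrite !big_ord_recr big_ord0 /= mul1r addn0.
have -> : odd (2 * j + 1)%N = true by rewrite oddD oddM.
have -> : odd (2 * j)%N = false by rewrite oddM.
rewrite andbF mulr1 andbT muln_gt0 /=.
case: (0 < j)%N; last by rewrite mulr1.
by rewrite sq1 -exprD addnn -mul2n.
Qed.

Lemma euler M K : (M <= K)%N ->
  cong M (pr (fun i => 0 < i)%N K * pr odd K) 1.
Proof.
move=> hK.
set D := pr (fun i => 0 < i)%N K.
have e1 : pr (fun i => 0 < i)%N (2 * K) = D * (D * pr odd (2 * K)).
  rewrite mulrA pr_sq; apply: pr_split => i.
    by case: i => [|i] //=; case: (odd i).
  by case: (odd i); rewrite ?andbF ?andbT.
have e2 : cong M (D * (D * pr odd (2 * K))) (D * 1).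
  rewrite -e1 mulr1.
  have h2 : (M <= 2 * K)%N by lia.
  exact: (cong_trans (pr_stab _ h2) (cong_sym (pr_stab _ hK))).
have e3 := cong_cancel (pr_unit K (isT : ~~ (0 < 0)%N)) e2.
have h2 : (M <= 2 * K)%N by lia.
apply: cong_trans e3.
apply: cong_mul (cong_refl _ D) _.
exact: (cong_trans (pr_stab _ hK) (cong_sym (pr_stab _ h2))).
Qed.

End Euler.
Section GenF.
Local Open Scope ring_scope.
Local Notation PF := {poly 'F_2}.

Definition Gp N : PF := \prod_(k < N.+1) \sum_(j < N.+1)
   (if (4 %| k)%N ==> (j == 0 :> nat) then 'X^(k * j) else 0).

Lemma bG N : ((b 4 N)%:R : 'F_2) = (Gp N)`_N.
Proof.
rewrite /Gp bigA_distr_bigA /= coef_sum /b -sum1dep_card natr_sum big_mkcond /=.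
apply: eq_bigr => f _.
case: (boolP [forall k : 'I_N.+1, (4 %| k)%N ==> (f k == 0 :> nat)]) => hf.
- rewrite (eq_bigr (fun k : 'I_N.+1 => 'X^(k * f k))); last first.
    by move=> k _; move/forallP: hf => /(_ k) ->.
  rewrite prodrXr coefXn /partition_mult andbT.
  have -> : (f ord0 == 0 :> nat) by move/forallP: hf => /(_ ord0); rewrite dvdn0.
  by rewrite /= eq_sym; case: (_ == _).
- rewrite andbF /=.
  move/forallPn: hf => [k hk].
  rewrite (bigD1 k) //= (negbTE hk) mul0r coef0 //.
Qed.

Lemma geo (y : PF) K : (\sum_(j < K) y ^+ j) * (1 + y) = 1 + y ^+ K.
Proof.
elim: K => [|K IH]; first by rewrite big_ord0 mul0r expr0 addxx.
rewrite big_ord_recr /= mulrDl IH mulrDr mulr1 -exprSr.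
by rewrite addrA -[X in X + _]addrA addxx addr0.
Qed.

Lemma GH N : cong N.+1 (Gp N * pr (fun i => ~~ (4 %| i))%N N.+1) 1.
Proof.
rewrite /Gp /pr -big_split /=.
have one : (1 : PF) = \prod_(k < N.+1) 1 by rewrite big1.
rewrite [X in cong _ _ X]one.
apply: cong_prod => k _.
case: (boolP (4 %| k)%N) => hk /=.
- rewrite mulr1 big_ord_recl /= muln0 expr0 big1 ?addr0; first exact: cong_refl.
  by move=> j _; rewrite /bump /=.
- rewrite (eq_bigr (fun j : 'I_N.+1 => ('X^k) ^+ j)); last by move=> j _; rewrite exprM.
  rewrite geo -exprM -[X in cong _ _ X]addr0; apply: cong_add (cong_refl _ _) _.
  apply: cong_Xn.
  have : k != 0 :> nat by apply: contraNneq hk => ->.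
  by case: (nat_of_ord k) => // k' _; rewrite mulSn leq_addr.
Qed.

End GenF.
Section Main2.
Local Open Scope ring_scope.
Local Notation PF := {poly 'F_2}.

Lemma qPF_unit m : (qPF m).[0] != 0.
Proof.
rewrite /qPF horner_prod big1 ?oner_eq0 // => l _.
by rewrite hornerD hornerXn expr0n muln_eq0 /= addr0 hornerE.
Qed.

Lemma qPF_stab M j : (M <= j)%N -> cong M (qPF j) (qPF M).
Proof.
move=> h; apply: (prod_stab (f := fun l => 1 + 'X^(4 * l.+1))) h => l hl.
rewrite -[X in cong _ _ X]addr0; apply: cong_add (cong_refl _ _) (cong_Xn _).
lia.
Qed.

Lemma qb_win M i : (M <= i)%N -> (i <= 3 * M)%N ->
  cong M (qb (2 * (2 * M)) i * qPF M) 1.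
Proof.
move=> h1 h2.
apply: (@cong_cancel _ (qPF M)); first exact: qPF_unit.
have e : cong M (qb (2 * (2 * M)) i * qPF i * qPF (2 * (2 * M) - i)) (qPF M).
  rewrite qb_fact; last lia.
  apply: qPF_stab; lia.
apply: cong_trans (cong_sym _) _; last first.
  rewrite mulr1; exact: e.
rewrite mulrCA mulrA.
apply: cong_mul; first apply: cong_mul (cong_refl _ _) _.
  by apply: qPF_stab.
apply: qPF_stab; lia.
Qed.

Lemma qPF_pr M : qPF M = pr (fun i => (4 %| i) && (0 < i))%N (4 * M.+1).
Proof.
rewrite /pr (blocks 4 M.+1 (fun i => if ((4 %| i) && (0 < i))%N then 1 + 'X^i else 1)).
rewrite big_ord_recl /= /qPF.
rewrite !big_ord_recr big_ord0 /= !mul1r.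
apply: eq_bigr => j _.
have hr r : (0 < r < 4)%N -> (4 %| (4 * bump 0 j + r))%N = false.
  by move=> hr; rewrite dvdn_addr ?dvdn_mulr //; case: r hr => [|[|[|[|r]]]].
rewrite !big_ord_recr big_ord0 /= (hr 1%N) // (hr 2%N) // (hr 3%N) // /= !mulr1 !mul1r addn0 dvdn_mulr //.

Qed.

Definition SS M : PF := \sum_(i < (2 * (2 * M)).+1) 'X^(ee (2 * M) i).

Lemma S_cong M : (0 < M)%N -> cong M (SS M) (pr odd (4 * (2 * M)) * qPF M).
Proof.
move=> hM.
rewrite -jtp; last lia.
rewrite mulr_suml /SS; apply: cong_sum => i _.
have hi := ltn_ord i.
case: (boolP ((M <= i) && (i <= 3 * M))%N) => /andP hw.
- case: hw => h1 h2.
  rewrite -mulrA -[X in cong _ X]mulr1; apply: cong_mul (cong_refl _ _) _.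
  apply: cong_sym; exact: qb_win.
- have hb : (M <= ee (2 * M) i)%N.
    apply: ee_big; apply/orP.
    case: (ltnP i M) => h1; first by left.
    by right; case: (leqP i (3 * M)) => h2 //; exfalso; apply: hw.
  apply: cong_trans (cong_Xn hb) _.
  apply: cong_sym; rewrite -(mul0r (qb (2 * (2 * M)) i * qPF M)) -mulrA.
  by apply: cong_mul (cong_Xn hb) (cong_refl _ _).
Qed.

Lemma G_cong N : cong N.+1 (Gp N) (SS N.+1).
Proof.
set M := N.+1.
set K := (4 * (2 * M))%N.
set H := pr (fun i => ~~ (4 %| i))%N M.
have hS := S_cong (ltn0Sn N).
have hGH := GH N.
have hHq : cong M (H * qPF M) (pr (fun i => 0 < i)%N K).
  rewrite (@pr_split (fun i => ~~ (4 %| i))%N (fun i => (4 %| i) && (0 < i))%N (fun i => 0 < i)%N K); last first.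
  - by move=> i; case: (4 %| i)%N.
  - by case=> [|i] //; case: (4 %| i.+1)%N.
  rewrite qPF_pr; apply: cong_mul.
    by apply: cong_sym; apply: pr_stab; rewrite /K; lia.
  apply: cong_trans (pr_stab _ _) (cong_sym (pr_stab _ _)); rewrite /K /M; lia.
have hSH : cong M (SS M * H) 1.
  apply: cong_trans (cong_mul hS (cong_refl _ H)) _.
  rewrite -mulrA; apply: cong_trans (cong_mul (cong_refl _ _) _) _.
    by rewrite mulrC; exact: hHq.
  rewrite mulrC; apply: euler; rewrite /K /M; lia.
rewrite -[X in cong _ X _]mulr1.
apply: cong_trans (cong_sym (cong_mul (cong_refl _ (Gp N)) hSH)) _.
rewrite mulrCA -[X in cong _ _ X]mulr1.
exact: cong_mul (cong_refl _ _) hGH.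
Qed.

Lemma G_coef0 N : (forall x, (8 * N + 1 != x * x)%N) -> (Gp N)`_N = 0.
Proof.
move=> hN.
rewrite (cong_coef (G_cong N) (ltnSn N)) /SS coef_sum big1 // => i _.
rewrite coefXn; have [x hx] := ee_sq (2 * N.+1) i.
case: eqP => // e; exfalso; move: (hN x); rewrite e hx eqxx //.
Qed.

End Main2.
Lemma not_sq p a u x : prime p -> odd a -> ~~ (p %| u) -> 0 < u -> p ^ a * u <> x * x.
Proof.
move=> pp oa pu u0 e.
have : 0 < p ^ a * u by rewrite muln_gt0 expn_gt0 prime_gt0.
rewrite e muln_gt0 andbb => x0.
have := congr1 (logn p) e.
have l1 : logn p (p ^ a * u) = a.
  rewrite lognM; last by []; last by rewrite expn_gt0 prime_gt0.
  by rewrite pfactorK // logn_coprime ?addn0 // prime_coprime.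
have l2 : logn p (x * x) = (logn p x).*2 by rewrite lognM // addnn.
rewrite l1 l2 => ea; move: oa; rewrite ea odd_double.
done.
Qed.

Lemma sq8 p : odd p -> p ^ 2 %% 8 = 1.
Proof.
move=> op; have [k ->] : exists k, p = k.*2.+1.
  by exists p./2; rewrite -[p in LHS](odd_double_half p) op.
have : 2 %| k * k.+1.
  case: (boolP (odd k)) => hk.
    by rewrite dvdn_mull // dvdn2 /= hk.
  by rewrite dvdn_mulr // dvdn2 hk.
case/dvdnP=> m hm.
have -> : (k.*2.+1 ^ 2 = m * 8 + 1)%N by rewrite -mul2n; nia.
by rewrite modnMDl.
Qed.

Theorem theorem3p10 (p alpha n i : nat) :
  prime p -> odd p -> 1 <= alpha -> 1 <= i <= p.-1 ->
  b 4 (p ^ (2 * alpha) * n + ((8 * i + p) * p ^ (2 * alpha - 1) - 1) %/ 8) %% 2 = 0.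
Proof.
move=> pp op ha /andP [hi1 hi2].
set a := (2 * alpha - 1).
have ea : 2 * alpha = a.+1 by rewrite /a; lia.
have oa : odd a.
  have : odd a.+1 = false by rewrite -ea oddM.
  by rewrite /=; case: (odd a).
have p0 : 0 < p by apply: prime_gt0.
have hpa : p ^ a.+1 %% 8 = 1.
  by rewrite -ea expnM -modnXm sq8 // exp1n.
set P := p ^ a.
have eP : p ^ a.+1 = p * P by rewrite expnS.
set q := p ^ a.+1 %/ 8.
have eq8 : p * P = q * 8 + 1 by rewrite -eP {1}(divn_eq (p ^ a.+1) 8) hpa.
have hc : (8 * i + p) * P - 1 = 8 * (i * P + q) by nia.
rewrite ea hc mulKn // eP.
set N := (p * P * n + (i * P + q))%N.
have hN : 8 * N + 1 = P * (8 * p * n + 8 * i + p) by rewrite /N; nia.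
have key : forall x, (8 * N + 1 != x * x)%N.
  move=> x; apply/eqP; rewrite hN; apply: not_sq => //.
    apply/negP => h.
    rewrite (dvdn_addl _ (dvdnn p)) dvdn_addr in h; last by rewrite mulnAC dvdn_mull.
    have cp8 : coprime p 8.
      rewrite prime_coprime // (_ : 8 = 2 ^ 3) // Euclid_dvdX //.
      apply/negP => /andP [/dvdn_leq h2 _].
      by move: op pp (h2 isT); clear; case: p => [|[|[|p]]].
    rewrite (Gauss_dvdr _ cp8) in h.
    move: (dvdn_leq hi1 h); lia.
  lia.
have h := G_coef0 key.
rewrite -bG in h.
move: h; rewrite -(@Fp_nat_mod 2) //.
have : b 4 N %% 2 < 2 by rewrite ltn_pmod.
case: (b 4 N %% 2) => [|[|k]] //.
Qed.
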